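(* Let $a\in\mathrm{F}^\uparrow$ with $\mathrm{supp}(a)=(0,r)$, let $\alpha_0\in(0,r)\cap A$, set $\alpha_k=(\alpha_0)a^k$ ($k\in\mathbb Z$), and let $b\in\mathrm{F}^\uparrow$ with $\mathrm{supp}(b)=(\alpha_0,\alpha_1)$. Let $d$ be a generator of the (cyclic) centralizer of $b$ in $\mathrm{F}_{(\alpha_0,\alpha_1)}$. Then the centralizer of the set $\{a^{-k}ba^k\mid k\in\mathbb Z\}$ in $\mathrm{F}$ is the subgroup generated by $\{a^{-k}da^k\mid k\in\mathbb Z\}$.
   Context: Fix an admissible triple $(r,\Lambda,A)$: $r>0$, $\Lambda\le\mathbb R^*_+$ a nontrivial multiplicative subgroup, $A\subseteq\mathbb R$ an additive subgroup with $r\in A$ and $\Lambda A\subseteq A$. $\mathrm{F}=\mathrm{F}(r,\Lambda,A)$ is the group of homeomorphisms of $[0,r)$ that are piecewise affine with finitely many breakpoints, all slopes in $\Lambda$, breakpoints and their images in $A$; maps act on the right. $\mathrm{F}^\uparrow=\{x\in\mathrm{F}\mid(t)x\ge t\ \forall t\}$; $\mathrm{supp}(x)$ is the set of non-fixed points; $\mathrm{F}_S=\{x\in\mathrm{F}\mid\mathrm{supp}(x)\subseteq S\}$. *)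

(* Defs.v *)
From Stdlib Require Import Reals.
Open Scope R_scope.

Definition admissible (r : R) (Lam A : R -> Prop) : Prop :=
  0 < r /\
  (forall l, Lam l -> 0 < l) /\ Lam 1 /\
  (forall l m, Lam l -> Lam m -> Lam (l * m)) /\
  (forall l, Lam l -> Lam (/ l)) /\
  (exists l, Lam l /\ l <> 1) /\
  A 0 /\ (forall x y, A x -> A y -> A (x + y)) /\ (forall x, A x -> A (- x)) /\
  A r /\ (forall l x, Lam l -> A x -> A (l * x)).

Definition I0r (r t : R) : Prop := 0 <= t < r.

Definition cont_on (D : R -> Prop) (f : R -> R) : Prop :=
  forall x, D x -> forall eps, 0 < eps -> exists delta, 0 < delta /\
    forall y, D y -> Rabs (y - x) < delta -> Rabs (f y - f x) < eps.

(* Elements of F(r,Lam,A) are represented as functions R -> R, equal to the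
   identity outside [0,r).  Maps act on the right: (t)(xy) = ((t)x)y, i.e. the
   product xy is the function  fun t => y (x t). *)
Definition inF (r : R) (Lam A : R -> Prop) (f : R -> R) : Prop :=
  (forall t, ~ I0r r t -> f t = t) /\
  (exists g : R -> R,
     (forall t, I0r r t -> I0r r (f t) /\ I0r r (g t) /\ g (f t) = t /\ f (g t) = t)
     /\ cont_on (I0r r) f /\ cont_on (I0r r) g) /\
  (exists (n : nat) (p lam c : nat -> R),
     p 0%nat = 0 /\ p n = r /\
     (forall i, (i < n)%nat -> p i < p (S i)) /\
     (forall i, (i < n)%nat -> A (p i) /\ A (f (p i)) /\ Lam (lam i)) /\
     (forall i t, (i < n)%nat -> p i <= t < p (S i) -> f t = lam i * t + c i)).

Definition inFup (r : R) (Lam A : R -> Prop) (f : R -> R) : Prop :=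
  inF r Lam A f /\ forall t, I0r r t -> t <= f t.

Definition supp (r : R) (f : R -> R) (t : R) : Prop := I0r r t /\ f t <> t.

Definition commute (x y : R -> R) : Prop := forall t, x (y t) = y (x t).

Inductive gen (S : (R -> R) -> Prop) : (R -> R) -> Prop :=
| gen_id : gen S (fun t => t)
| gen_base : forall g, S g -> gen S g
| gen_mul : forall g h, gen S g -> gen S h -> gen S (fun t => h (g t))
| gen_inv : forall g h, gen S g -> (forall t, h (g t) = t /\ g (h t) = t) -> gen S h
| gen_ext : forall g h, gen S g -> (forall t, h t = g t) -> gen S h.

(* conjset a b g  <->  g = a^{-k} b a^k for some integer k (right action):
   for k = n >= 0:  (t a^n) g = (t b) a^n ;  for k = -n:  (t g) a^n = (t a^n) b *)
Definition conjset (a b : R -> R) (g : R -> R) : Prop :=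
  exists n : nat,
    (forall t, g (Nat.iter n a t) = Nat.iter n a (b t)) \/
    (forall t, Nat.iter n a (g t) = b (Nat.iter n a t)).

(* Main.v *)
Require Import Defs.
From Stdlib Require Import Reals Lra Lia List Classical ClassicalEpsilon ZArith.
Open Scope R_scope.

Lemma mono_cont (D : R -> Prop) f : (forall s t, s < t -> f s < f t) -> (forall s, exists t, f t = s) ->
  cont_on D f.
Proof.
  intros Hm Hs x _ eps He.
  destruct (Hs (f x - eps)) as [y1 E1]. destruct (Hs (f x + eps)) as [y2 E2].
  assert (y1 < x). { destruct (Rlt_dec y1 x); auto. destruct (Req_dec y1 x). subst; lra.
    assert (f x < f y1) by (apply Hm; lra). lra. }
  assert (x < y2). { destruct (Rlt_dec x y2); auto. destruct (Req_dec y2 x). subst; lra.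
    assert (f y2 < f x) by (apply Hm; lra). lra. }
  exists (Rmin (x - y1) (y2 - x)). split. apply Rmin_pos; lra.
  intros y _ Hy. apply Rabs_def1.
  - assert (y < y2). { assert (Rmin (x - y1) (y2 - x) <= y2 - x) by apply Rmin_r.
      apply Rabs_def2 in Hy. lra. }
    assert (f y < f y2) by (apply Hm; lra). lra.
  - assert (y1 < y). { assert (Rmin (x - y1) (y2 - x) <= x - y1) by apply Rmin_l.
      apply Rabs_def2 in Hy. lra. }
    assert (f y1 < f y) by (apply Hm; lra). lra.
Qed.

Lemma index_find (n : nat) (p : nat -> R) t :
  p 0%nat <= t -> forall m, (m <= n)%nat -> t < p m -> exists i, (i < m)%nat /\ p i <= t < p (S i).
Proof.
  intros H0 m. induction m as [|m IH]; intros Hm Ht. lra.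
  destruct (Rlt_dec t (p m)). destruct IH as [i [? ?]]; auto. lia. exists i; split; auto; lia.
  exists m. split. lia. lra.
Qed.

Lemma p_mono (n : nat) (p : nat -> R) : (forall i, (i < n)%nat -> p i < p (S i)) ->
  forall i j, (i <= j <= n)%nat -> p i <= p j.
Proof.
  intros H i j Hij. induction j as [|j IH].
  - assert (i = 0%nat) by lia. subst; lra.
  - destruct (Nat.eq_dec i (S j)). subst; lra.
    assert (p i <= p j) by (apply IH; lia). assert (p j < p (S j)) by (apply H; lia). lra.
Qed.

Lemma p_smono (n : nat) (p : nat -> R) : (forall i, (i < n)%nat -> p i < p (S i)) ->
  forall i j, (i < j <= n)%nat -> p i < p j.
Proof.
  intros H i j Hij. assert (p i < p (S i)) by (apply H; lia).
  assert (p (S i) <= p j) by (apply (p_mono n); auto; lia). lra.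
Qed.

Section PL.
Variables (r : R) (Lam A : R -> Prop).
Hypothesis rpos : 0 < r.
Hypothesis Lpos : forall l, Lam l -> 0 < l.
Hypothesis L1 : Lam 1.
Hypothesis Lmul : forall l m, Lam l -> Lam m -> Lam (l * m).
Hypothesis Linv : forall l, Lam l -> Lam (/ l).
Hypothesis A0 : A 0.
Hypothesis Aadd : forall x y, A x -> A y -> A (x + y).
Hypothesis Aopp : forall x, A x -> A (- x).
Hypothesis Ar : A r.
Hypothesis LA : forall l x, Lam l -> A x -> A (l * x).

Definition Good (L : list R) (f : R -> R) : Prop :=
  forall u v, 0 <= u < v -> v <= r -> (forall q, In q L -> ~ (u < q < v)) ->
  exists l c, Lam l /\ A c /\ forall t, u <= t < v -> f t = l * t + c.

Definition G (f : R -> R) : Prop :=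
  (forall t, ~ I0r r t -> f t = t) /\
  (forall s t, s < t -> f s < f t) /\
  (forall s, exists t, f t = s) /\
  exists L, Forall A L /\ Good L f.

Lemma ex_right L t : t < r -> exists v, t < v <= r /\ forall q, In q L -> ~ (t < q < v).
Proof.
  intro Ht. induction L as [|q L IH].
  - exists r. split. lra. intros q [].
  - destruct IH as [v [Hv Hq]].
    destruct (Rlt_dec t q); [destruct (Rlt_dec q v)|].
    + exists q. split. lra. intros q' [<-|Hi]. lra. intro. apply (Hq q'); auto; lra.
    + exists v. split. lra. intros q' [<-|Hi]. lra. auto.
    + exists v. split. lra. intros q' [<-|Hi]. lra. auto.
Qed.

Lemma ex_left L : exists u, 0 <= u < r /\ forall q, In q L -> ~ (u < q < r).
Proof.
  induction L as [|q L IH].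
  - exists 0. split. lra. intros q [].
  - destruct IH as [u [Hu Hq]].
    destruct (Rlt_dec u q); [destruct (Rlt_dec q r)|].
    + exists q. split. lra. intros q' [<-|Hi]. lra. intro. apply (Hq q'); auto; lra.
    + exists u. split. lra. intros q' [<-|Hi]. lra. auto.
    + exists u. split. lra. intros q' [<-|Hi]. lra. auto.
Qed.

Lemma G_ext f g : G f -> (forall t, g t = f t) -> G g.
Proof.
  intros [H1 [H2 [H3 [L [HL HG]]]]] E. repeat split.
  - intros t Ht. rewrite E; auto.
  - intros s t Hst. rewrite !E; auto.
  - intro s. destruct (H3 s) as [t Ht]. exists t. rewrite E; auto.
  - exists L. split; auto. intros u v Hu Hv Hq. destruct (HG u v Hu Hv Hq) as [l [c [? [? Hc]]]].
    exists l, c. repeat split; auto. intros. rewrite E; auto.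
Qed.

Lemma G_basic f : G f -> f 0 = 0 /\ f r = r /\ (forall t, I0r r t -> I0r r (f t)).
Proof.
  intros [H1 [H2 [H3 _]]].
  assert (fr : f r = r). { apply H1. unfold I0r. lra. }
  assert (f0 : f 0 = 0).
  { destruct (H3 0) as [s Hs].
    destruct (Rlt_dec s 0) as [Hs0|Hs0].
    - rewrite H1 in Hs. lra. unfold I0r; lra.
    - destruct (Rle_dec r s).
      + rewrite H1 in Hs. lra. unfold I0r; lra.
      + assert (f 0 <= 0).
        { destruct (Req_dec s 0). subst; lra. assert (f 0 < f s) by (apply H2; lra). lra. }
        destruct (Rlt_dec (f 0) 0) as [Hn|Hn]; [|lra].
        assert (Hm : f (f 0) < f 0) by (apply H2; lra).
        rewrite (H1 (f 0)) in Hm. lra. unfold I0r; lra. }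
  split; auto. split; auto.
  intros t [Ht1 Ht2]. split.
  - destruct (Req_dec t 0). subst; lra. assert (f 0 < f t) by (apply H2; lra). lra.
  - rewrite <- fr. apply H2; auto.
Qed.

Lemma G_A f t : G f -> A t -> A (f t).
Proof.
  intros Gf At. destruct Gf as [H1 [H2 [H3 [L [HL HG]]]]].
  destruct (classic (I0r r t)) as [Ht|Ht].
  - destruct Ht as [Ht1 Ht2]. destruct (ex_right L t Ht2) as [v [Hv Hq]].
    destruct (HG t v) as [l [c [Hl [Hc E]]]]; try lra; auto.
    rewrite E by lra. apply Aadd; auto.
  - rewrite H1; auto.
Qed.

Lemma G_inv f : G f -> exists g, G g /\ forall t, g (f t) = t /\ f (g t) = t.
Proof.
  intro Gf. pose proof (G_basic f Gf) as [f0 [fr fI]].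
  destruct Gf as [H1 [H2 [H3 [L [HL HG]]]]].
  set (g := fun s => proj1_sig (constructive_indefinite_description _ (H3 s))).
  assert (fg : forall s, f (g s) = s).
  { intro s. unfold g. destruct (constructive_indefinite_description _ (H3 s)). auto. }
  assert (inj : forall x y, f x = f y -> x = y).
  { intros x y E. destruct (Rtotal_order x y) as [h|[h|h]]; auto.
    apply H2 in h. lra. apply H2 in h. lra. }
  assert (gf : forall t, g (f t) = t). { intro t. apply inj. apply fg. }
  assert (gmono : forall s t, s < t -> g s < g t).
  { intros s t Hst. destruct (Rlt_dec (g s) (g t)); auto.
    assert (g t <= g s) by lra. destruct (Req_dec (g t) (g s)).
    - rewrite <- (fg s), <- (fg t), H0 in Hst. lra.
    - assert (f (g t) < f (g s)) by (apply H2; lra). rewrite !fg in H4. lra. }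
  exists g. split; [|intro t; split; auto].
  repeat split.
  - intros t Ht. rewrite <- (H1 t Ht) at 1. apply gf.
  - auto.
  - intro s. exists (f s). auto.
  - exists (map f L). split.
    + apply Forall_forall. intros x Hx. apply in_map_iff in Hx as [q [<- Hq]].
      apply G_A. repeat split; auto. exists L; auto.
      rewrite Forall_forall in HL; auto.
    + intros u v Hu Hv Hq.
      assert (gI : forall t, I0r r t -> I0r r (g t)).
      { intros t [Ht1 Ht2]. split.
        - assert (g0 : g 0 = 0) by (rewrite <- f0 at 1; apply gf).
          destruct (Req_dec t 0). subst. lra.
          assert (g 0 < g t) by (apply gmono; lra). lra.
        - assert (gr : g r = r) by (rewrite <- fr at 1; apply gf).
          rewrite <- gr. apply gmono. lra. }
      assert (gu : 0 <= g u) by (destruct (gI u); unfold I0r; lra).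
      assert (guv : g u < g v) by (apply gmono; lra).
      assert (gv : g v <= r).
      { destruct (Req_dec v r). subst. rewrite <- fr at 1. rewrite gf. lra.
        destruct (gI v); unfold I0r; lra. }
      destruct (HG (g u) (g v)) as [l [c [Hl [Hc E]]]]; try lra.
      { intros q Hin Hq'. apply (Hq (f q)). apply in_map; auto.
        split; [rewrite <- (fg u)|rewrite <- (fg v)]; apply H2; lra. }
      exists (/ l), (/ l * - c). repeat split; auto.
      intros t Ht. assert (Hl0 := Lpos l Hl).
      assert (g u <= g t < g v).
      { split. destruct (Req_dec u t). subst; lra. left; apply gmono; lra. apply gmono; lra. }
      specialize (E (g t) H). rewrite fg in E. rewrite E at 2. field. lra.
Qed.

Lemma G_comp f g : G f -> G g -> G (fun t => g (f t)).
Proof.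
  intros Gf Gg.
  destruct (G_inv f Gf) as [fi [Gfi Efi]].
  pose proof (G_basic f Gf) as [f0 [fr fI]].
  destruct Gf as [H1 [H2 [H3 [L [HL HG]]]]].
  destruct Gg as [K1 [K2 [K3 [M [HM KG]]]]].
  repeat split.
  - intros t Ht. rewrite H1, K1; auto.
  - auto.
  - intro s. destruct (K3 s) as [t Ht]. destruct (H3 t) as [u Hu]. exists u. congruence.
  - exists (L ++ map fi M). split.
    + apply Forall_app. split; auto.
      apply Forall_forall. intros x Hx. apply in_map_iff in Hx as [q [<- Hq]].
      apply G_A; auto. rewrite Forall_forall in HM; auto.
    + intros u v Hu Hv Hq.
      destruct (HG u v) as [l [c [Hl [Hc E]]]]; try lra.
      { intros q Hin. apply Hq. apply in_or_app; auto. }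
      assert (fu : 0 <= f u) by (rewrite <- f0; destruct (Req_dec u 0); [subst; lra| left; apply H2; lra]).
      assert (fv : f v <= r) by (rewrite <- fr; destruct (Req_dec v r); [subst; lra| left; apply H2; lra]).
      destruct (KG (f u) (f v)) as [m [c' [Hm [Hc' E']]]]; try (split; auto; apply H2; lra); auto.
      { intros q Hin Hq'. apply (Hq (fi q)). apply in_or_app. right. apply in_map; auto.
        destruct (Efi q) as [_ e]. split.
        - destruct (Rlt_dec u (fi q)); auto. destruct (Req_dec u (fi q)). subst. rewrite e in Hq'. lra.
          assert (f (fi q) < f u) by (apply H2; lra). lra.
        - destruct (Rlt_dec (fi q) v); auto. destruct (Req_dec v (fi q)). subst. rewrite e in Hq'. lra.
          assert (f v < f (fi q)) by (apply H2; lra). lra. }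
      exists (m * l), (m * c + c'). repeat split; auto.
      intros t Ht. rewrite E' . rewrite E by lra. ring.
      split. destruct (Req_dec u t). subst; lra. left; apply H2; lra. apply H2; lra.
Qed.


Lemma inF_G f : inF r Lam A f -> G f.
Proof.
  intros [H1 [[g [Hh [Hcf Hcg]]] [n [p [lam [c [p0 [pn [pinc [pA Hp]]]]]]]]]].
  assert (lampos : forall i, (i < n)%nat -> 0 < lam i) by (intros i Hi; apply Lpos, (pA i Hi)).
  assert (closed : forall i t, (i < n)%nat -> p i <= t <= p (S i) -> t < r -> f t = lam i * t + c i).
  { intros i t Hi Ht Htr. destruct (Rlt_dec t (p (S i))) as [h|h]. apply Hp; auto; lra.
    assert (Et : t = p (S i)) by lra. clear h.
    assert (Hpi : p i < t) by (rewrite Et; apply pinc; auto).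
    assert (tI : I0r r t).
    { split; [|lra]. assert (p 0%nat <= p i) by (apply (p_mono n); auto; lia). lra. }
    apply NNPP. intro Hne.
    set (D := Rabs (f t - (lam i * t + c i))).
    assert (Dpos : 0 < D) by (apply Rabs_pos_lt; lra).
    destruct (Hcf t tI (D / 2)) as [dl [Hdl Hc]]. lra.
    assert (li := lampos i Hi).
    set (h := Rmin (Rmin (dl / 2) (t - p i)) (D / (4 * lam i))).
    assert (hpos : 0 < h). { unfold h. repeat apply Rmin_pos; try lra. apply Rdiv_lt_0_compat; lra. }
    assert (h1 : h <= dl / 2) by (unfold h; eapply Rle_trans; [apply Rmin_l|apply Rmin_l]).
    assert (h2 : h <= t - p i) by (unfold h; eapply Rle_trans; [apply Rmin_l|apply Rmin_r]).
    assert (h3 : h <= D / (4 * lam i)) by (unfold h; apply Rmin_r).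
    assert (h3' : lam i * h <= D / 4).
    { apply (Rmult_le_compat_l (lam i)) in h3; [|lra]. replace (lam i * (D / (4 * lam i))) with (D/4) in h3 by (field; lra). auto. }
    assert (yI : I0r r (t - h)).
    { split; [|lra]. assert (p 0%nat <= p i) by (apply (p_mono n); auto; lia). lra. }
    specialize (Hc (t - h) yI).
    rewrite Rabs_left in Hc by lra. specialize (Hc ltac:(lra)).
    rewrite (Hp i (t - h)) in Hc by (auto; lra).
    apply Rabs_def2 in Hc. unfold D in *.
    assert (lam i * (t - h) = lam i * t - lam i * h) by ring.
    assert (0 < lam i * h) by (apply Rmult_lt_0_compat; lra).
    destruct (Rle_dec 0 (f t - (lam i * t + c i))).
    rewrite Rabs_right in * by lra. lra. rewrite Rabs_left in * by lra. lra. }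
  assert (mono : forall m, (m <= n)%nat -> forall s t, 0 <= s < t -> t <= p m -> t < r -> f s < f t).
  { intro m. induction m as [|m IH]; intros Hm s t Hst Htm Htr. lra.
    destruct (Rle_dec t (p m)). apply IH; auto; lia.
    assert (pm0 : 0 <= p m) by (rewrite <- p0; apply (p_mono n); auto; lia).
    assert (Hmn : (m < n)%nat) by lia. assert (li := lampos m Hmn).
    destruct (Rle_dec (p m) s).
    - rewrite !(closed m) by (auto; lra).
      apply Rplus_lt_compat_r, Rmult_lt_compat_l; lra.
    - assert (f s < f (p m)) by (apply IH; auto; lia || lra).
      assert (f (p m) < f t).
      { rewrite !(closed m) by (auto; lra). apply Rplus_lt_compat_r, Rmult_lt_compat_l; lra. }
      lra. }
  assert (fI : forall t, I0r r t -> I0r r (f t)) by (intros t Ht; apply Hh; auto).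
  repeat split.
  - auto.
  - intros s t Hst.
    destruct (classic (I0r r s)) as [Is|Is]; destruct (classic (I0r r t)) as [It|It].
    + destruct Is, It. apply (mono n); auto; lra.
    + rewrite (H1 t) by auto. destruct (fI s Is). unfold I0r in *. lra.
    + rewrite (H1 s) by auto. destruct (fI t It). unfold I0r in *. lra.
    + rewrite H1, (H1 t); auto.
  - intro s. destruct (classic (I0r r s)) as [Is|Is].
    + exists (g s). apply Hh; auto.
    + exists s. auto.
  - exists (map p (seq 0 (S n))). split.
    + apply Forall_forall. intros x Hx. apply in_map_iff in Hx as [i [<- Hi]].
      apply in_seq in Hi. destruct (Nat.eq_dec i n) as [e|e]. rewrite e, pn; auto. apply pA; lia.
    + intros u v Hu Hv Hq.
      destruct (index_find n p u (ltac:(rewrite p0; lra)) n (le_n n) (ltac:(rewrite pn; lra))) as [i [Hi Hui]].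
      exists (lam i), (c i). split. apply pA; auto. split.
      * assert (E : f (p i) = lam i * p i + c i) by (apply Hp; auto; split; [lra| apply pinc; auto]).
        replace (c i) with (f (p i) + - (lam i * p i)) by lra.
        apply Aadd. apply pA; auto. apply Aopp, LA; apply pA; auto.
      * intros t Ht. apply Hp; auto. split. lra.
        destruct (Rle_dec v (p (S i))). lra.
        exfalso. apply (Hq (p (S i))). apply in_map. apply in_seq. lia. lra.
Qed.

Lemma partition L : exists n (p : nat -> R), p 0%nat = 0 /\ p n = r /\
  (forall i, (i < n)%nat -> p i < p (S i)) /\
  (forall i, (i <= n)%nat -> p i = 0 \/ p i = r \/ In (p i) L) /\
  (forall q, In q L -> 0 < q < r -> exists i, (i <= n)%nat /\ p i = q).
Proof.
  induction L as [|q L IH].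
  - exists 1%nat, (fun i => match i with O => 0 | _ => r end).
    repeat split; auto.
    + intros i Hi. assert (i = 0%nat) by lia. subst. lra.
    + intros i Hi. destruct i; auto.
    + intros q [].
  - destruct IH as [n [p [p0 [pn [pinc [pmem pcov]]]]]].
    destruct (classic ((0 < q < r) /\ ~ exists i, (i <= n)%nat /\ p i = q)) as [[Hq Hnq]|Hq].
    + destruct (index_find n p q ltac:(rewrite p0; lra) n (le_n n) ltac:(rewrite pn; lra)) as [i [Hi Hpi]].
      assert (Hpi' : p i < q). { destruct (Req_dec (p i) q). exfalso; apply Hnq; exists i; split; auto; lia. lra. }
      exists (S n), (fun j => if (j <=? i)%nat then p j else if (j =? S i)%nat then q else p (pred j)).
      repeat split.
      * simpl. auto.
      * destruct (Nat.leb_spec (S n) i). lia. destruct (Nat.eqb_spec (S n) (S i)). lia. simpl. auto.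
      * intros j Hj.
        destruct (Nat.leb_spec j i); destruct (Nat.leb_spec (S j) i);
        destruct (Nat.eqb_spec j (S i)); destruct (Nat.eqb_spec (S j) (S i)); try lia.
        -- apply pinc; lia.
        -- replace j with i by lia. lra.
        -- subst. simpl. lra.
        -- simpl. destruct j. lia. simpl. apply pinc; lia.
      * intros j Hj.
        destruct (Nat.leb_spec j i). destruct (pmem j ltac:(lia)) as [?|[?|?]]; [left|right;left|right;right;right]; auto.
        destruct (Nat.eqb_spec j (S i)). right; right; left; auto.
        destruct (pmem (pred j) ltac:(lia)) as [?|[?|?]]; [left|right;left|right;right;right]; auto.
      * intros q' [<-|Hin] Hq'.
        -- exists (S i). split. lia. destruct (Nat.leb_spec (S i) i). lia. rewrite Nat.eqb_refl. auto.
        -- destruct (pcov q' Hin Hq') as [j [Hj Ej]].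
           destruct (Nat.leb_spec j i).
           ++ exists j. split. lia. destruct (Nat.leb_spec j i); [auto|lia].
           ++ exists (S j). split. lia. destruct (Nat.leb_spec (S j) i). lia.
              destruct (Nat.eqb_spec (S j) (S i)). lia. simpl. auto.
    + exists n, p. repeat split; auto.
      * intros i Hi. destruct (pmem i Hi) as [?|[?|?]]; [left|right;left|right;right;right]; auto.
      * intros q' [<-|Hin] Hq'.
        -- apply NNPP. intro Hn. apply Hq. split; auto.
        -- auto.
Qed.

Lemma choice_nat (P : nat -> R -> R -> Prop) : (forall i, exists l c, P i l c) ->
  exists lam c : nat -> R, forall i, P i (lam i) (c i).
Proof.
  intro H.
  assert (H' : forall i, exists lc : R * R, P i (fst lc) (snd lc)).
  { intro i. destruct (H i) as [l [c Hc]]. exists (l, c). auto. }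
  exists (fun i => fst (proj1_sig (constructive_indefinite_description _ (H' i)))).
  exists (fun i => snd (proj1_sig (constructive_indefinite_description _ (H' i)))).
  intro i. destruct (constructive_indefinite_description _ (H' i)). auto.
Qed.

Lemma G_inF f : G f -> inF r Lam A f.
Proof.
  intro Gf. pose proof (G_basic f Gf) as [f0 [fr fI]].
  destruct (G_inv f Gf) as [g [Gg Eg]].
  pose proof (G_basic g Gg) as [g0 [gr gI]].
  pose proof Gf as [H1 [H2 [H3 [L [HL HG]]]]].
  split; auto. split.
  - exists g. split. intros t Ht. repeat split; try apply fI; try apply gI; auto; apply Eg.
    split; apply mono_cont; apply Gf || apply Gg.
  - destruct (partition L) as [n [p [p0 [pn [pinc [pmem pcov]]]]]].
    assert (pI : forall i, (i < n)%nat -> 0 <= p i < r).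
    { intros i Hi. split. rewrite <- p0. apply (p_mono n); auto; lia. rewrite <- pn. apply (p_smono n); auto. }
    destruct (choice_nat (fun i l c => (i < n)%nat -> Lam l /\ A c /\ forall t, p i <= t < p (S i) -> f t = l * t + c))
      as [lam [c Hlc]].
    { intro i. destruct (Compare_dec.lt_dec i n) as [Hi|Hi]; [|exists 0, 0; intro; lia].
      destruct (HG (p i) (p (S i))) as [l [c' Hc]].
      - split. apply pI; auto. apply pinc; auto.
      - rewrite <- pn. apply (p_mono n); auto; lia.
      - intros q Hq Hq'. destruct (pcov q Hq) as [j [Hj Ej]].
        { assert (p i >= 0) by (destruct (pI i Hi); lra). assert (p (S i) <= r) by (rewrite <- pn; apply (p_mono n); auto; lia). lra. }
        subst q. destruct (Compare_dec.le_lt_dec j i).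
        + assert (p j <= p i) by (apply (p_mono n); auto; lia). lra.
        + assert (p (S i) <= p j) by (apply (p_mono n); auto; lia). lra.
      - exists l, c'. auto. }
    exists n, p, lam, c. repeat split; auto.
    + assert (Ap : A (p i)). { destruct (pmem i) as [E|[E|E]]; try lia; rewrite ?E; auto. rewrite Forall_forall in HL; auto. }
      auto.
    + apply G_A; auto. destruct (pmem i) as [E|[E|E]]; try lia; rewrite ?E; auto. rewrite Forall_forall in HL; auto.
    + apply Hlc; auto.
    + intros i t Hi Ht. apply Hlc; auto.
Qed.


Definition restr (u v : R) (f : R -> R) (t : R) : R :=
  if Rlt_dec u t then if Rlt_dec t v then f t else t else t.

Lemma restr_in u v f t : f u = u -> f v = v -> u <= t <= v -> restr u v f t = f t.
Proof.
  intros Hu Hv Ht. unfold restr. destruct (Rlt_dec u t); destruct (Rlt_dec t v); auto.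
  assert (t = v) by lra. subst; auto. assert (t = u) by lra. subst; auto. assert (t = u) by lra. subst; auto.
Qed.

Lemma restr_out u v f t : ~ (u < t < v) -> restr u v f t = t.
Proof. intros Ht. unfold restr. destruct (Rlt_dec u t); destruct (Rlt_dec t v); auto. exfalso; auto. Qed.

Lemma mono_le f s t : (forall s t, s < t -> f s < f t) -> s <= t -> f s <= f t.
Proof. intros H Hst. destruct (Req_dec s t). subst; lra. left; apply H; lra. Qed.

Lemma mono_rev f s t : (forall s t, s < t -> f s < f t) -> f s < f t -> s < t.
Proof. intros H Hst. destruct (Rlt_dec s t); auto. assert (f t <= f s) by (apply mono_le; auto; lra). lra. Qed.

Lemma G_restr f u v : G f -> 0 <= u < v -> v <= r -> A u -> A v -> f u = u -> f v = v -> G (restr u v f).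
Proof.
  intros Gf Huv Hvr Au Av fu fv.
  pose proof Gf as [H1 [H2 [H3 [L [HL HG]]]]].
  repeat split.
  - intros t Ht. apply restr_out. unfold I0r in Ht. lra.
  - intros s t Hst.
    destruct (classic (u <= s <= v)) as [Is|Is]; destruct (classic (u <= t <= v)) as [It|It].
    + rewrite !restr_in; auto.
    + rewrite restr_in by auto. rewrite restr_out by lra.
      assert (f s <= f v) by (apply mono_le; auto; lra). lra.
    + rewrite restr_out by lra. rewrite restr_in by auto.
      assert (f u <= f t) by (apply mono_le; auto; lra). lra.
    + rewrite !restr_out by lra. auto.
  - intro s. destruct (classic (u < s < v)) as [Is|Is].
    + destruct (H3 s) as [t Ht]. exists t.
      assert (u < t) by (apply (mono_rev f); auto; lra).
      assert (t < v) by (apply (mono_rev f); auto; lra).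
      rewrite restr_in; auto; lra.
    + exists s. apply restr_out; auto.
  - exists (u :: v :: L). split.
    + repeat constructor; auto.
    + intros s t Hs Ht Hq.
      assert (Hu' := Hq u ltac:(simpl; auto)). assert (Hv' := Hq v ltac:(simpl; auto)).
      destruct (classic (u <= s /\ t <= v)) as [Hin|Hout].
      * destruct (HG s t) as [l [c [Hl [Hc E]]]]; auto.
        { intros q Hq'. apply Hq. simpl; auto. }
        exists l, c. repeat split; auto. intros x Hx. rewrite restr_in by (auto; lra). auto.
      * exists 1, 0. repeat split; auto. intros x Hx. rewrite restr_out. ring. lra.
Qed.

Definition blocked (f : R -> R) (u v : R) : Prop := forall t, ~ (u < t < v) -> f t = t.

Lemma blocked_inv f u v t : (forall s t, s < t -> f s < f t) -> blocked f u v -> u < v ->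
  u < t < v -> u < f t < v.
Proof.
  intros H Hb Huv Ht. split.
  - rewrite <- (Hb u) by lra. apply H; lra.
  - rewrite <- (Hb v) by lra. apply H; lra.
Qed.

Lemma blocked_commute f g u v u' v' : (forall s t, s < t -> f s < f t) -> (forall s t, s < t -> g s < g t) ->
  blocked f u v -> blocked g u' v' -> u < v -> u' < v' -> v <= u' -> commute f g.
Proof.
  intros Hf Hg Bf Bg H1 H2 H3 t.
  destruct (classic (u < t < v)) as [Ht|Ht].
  - pose proof (blocked_inv f u v t Hf Bf H1 Ht). rewrite (Bg t), (Bg (f t)); auto; lra.
  - destruct (classic (u' < t < v')) as [Ht'|Ht'].
    + pose proof (blocked_inv g u' v' t Hg Bg H2 Ht'). rewrite (Bf t), (Bf (g t)); auto; lra.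
    + rewrite (Bf t), (Bg t); auto.
Qed.


Definition apow (a ai : R -> R) (k : Z) : R -> R :=
  match k with Z0 => fun t => t | Zpos p => Nat.iter (Pos.to_nat p) a | Zneg p => Nat.iter (Pos.to_nat p) ai end.

Lemma Z_cases (k : Z) : (exists n, k = Z.of_nat n) \/ (exists n, k = (- Z.of_nat (S n))%Z).
Proof.
  destruct (Z_le_gt_dec 0 k). left. exists (Z.to_nat k). lia.
  right. exists (Z.to_nat (- k - 1)). lia.
Qed.

Variables (a ai : R -> R).
Hypothesis aai : forall t, a (ai t) = t.
Hypothesis aia : forall t, ai (a t) = t.

Lemma apow_nat n t : apow a ai (Z.of_nat n) t = Nat.iter n a t.
Proof. destruct n. reflexivity. simpl. rewrite SuccNat2Pos.id_succ. reflexivity. Qed.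

Lemma apow_negnat n t : apow a ai (- Z.of_nat n) t = Nat.iter n ai t.
Proof. destruct n. reflexivity. simpl. rewrite SuccNat2Pos.id_succ. reflexivity. Qed.

Lemma apow_succ k t : apow a ai (k + 1) t = a (apow a ai k t).
Proof.
  destruct (Z_cases k) as [[n ->]|[n ->]].
  - replace (Z.of_nat n + 1)%Z with (Z.of_nat (S n)) by lia. rewrite !apow_nat. reflexivity.
  - replace (- Z.of_nat (S n) + 1)%Z with (- Z.of_nat n)%Z by lia. rewrite !apow_negnat. simpl. rewrite aai. auto.
Qed.

Lemma apow_pred k t : apow a ai (k - 1) t = ai (apow a ai k t).
Proof. replace k with (k - 1 + 1)%Z at 2 by lia. rewrite apow_succ, aia. auto. Qed.

Lemma apow_add k l t : apow a ai (k + l) t = apow a ai k (apow a ai l t).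
Proof.
  destruct (Z_cases k) as [[n ->]|[n ->]].
  - induction n. reflexivity.
    replace (Z.of_nat (S n) + l)%Z with (Z.of_nat n + l + 1)%Z by lia.
    replace (Z.of_nat (S n)) with (Z.of_nat n + 1)%Z by lia.
    rewrite !apow_succ, IHn. auto.
  - induction n. 
    + replace (- Z.of_nat 1 + l)%Z with (0 + l - 1)%Z by lia. rewrite apow_pred.
      replace (- Z.of_nat 1)%Z with (0 - 1)%Z by lia. rewrite apow_pred. reflexivity.
    + replace (- Z.of_nat (S (S n)) + l)%Z with (- Z.of_nat (S n) + l - 1)%Z by lia.
      replace (- Z.of_nat (S (S n)))%Z with (- Z.of_nat (S n) - 1)%Z by lia.
      rewrite !apow_pred, IHn. auto.
Qed.

Lemma apow_0 t : apow a ai 0 t = t.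
Proof. reflexivity. Qed.

Lemma apow_cancel k t : apow a ai k (apow a ai (- k) t) = t.
Proof. rewrite <- apow_add. replace (k + - k)%Z with 0%Z by lia. auto. Qed.

Lemma apow_cancel' k t : apow a ai (- k) (apow a ai k t) = t.
Proof. rewrite <- apow_add. replace (- k + k)%Z with 0%Z by lia. auto. Qed.

Hypothesis Ga : G a.
Hypothesis Gai : G ai.

Lemma G_id : G (fun t => t).
Proof.
  repeat split; auto. intro s; exists s; auto. exists nil. split. constructor.
  intros u v _ _ _. exists 1, 0. repeat split; auto. intros; ring.
Qed.

Lemma G_apow k : G (apow a ai k).
Proof.
  destruct (Z_cases k) as [[n ->]|[n ->]].
  - apply G_ext with (f := Nat.iter n a). 2: intro; apply apow_nat.
    induction n. apply G_id. apply G_ext with (f := fun t => a (Nat.iter n a t)). apply G_comp; auto. intro; reflexivity.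
  - apply G_ext with (f := Nat.iter (S n) ai). 2: intro; apply apow_negnat.
    induction (S n). apply G_id. apply G_ext with (f := fun t => ai (Nat.iter n0 ai t)). apply G_comp; auto. intro; reflexivity.
Qed.

Definition conjZ (k : Z) (f : R -> R) (t : R) : R := apow a ai k (f (apow a ai (- k) t)).

Lemma G_conjZ k f : G f -> G (conjZ k f).
Proof.
  intro Gf. unfold conjZ. apply (G_comp (fun t => f (apow a ai (- k) t))). apply G_comp; auto. apply G_apow. apply G_apow.
Qed.

Variable alpha0 : R.
Hypothesis a_up : forall t, 0 < t < r -> t < a t.
Hypothesis Hal0 : 0 < alpha0 < r.
Hypothesis Aal0 : A alpha0.

Definition alpha k := apow a ai k alpha0.

Lemma alpha_succ k : alpha (k + 1) = a (alpha k).
Proof. apply apow_succ. Qed.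

Lemma alpha_pred k : alpha k = ai (alpha (k + 1)).
Proof. rewrite alpha_succ, aia. auto. Qed.

Lemma alpha_pos k : 0 < alpha k < r.
Proof.
  pose proof (G_basic _ (G_apow k)) as [f0 [fr fI]].
  destruct (G_apow k) as [_ [Hm _]]. unfold alpha. split.
  - rewrite <- f0. apply Hm. lra.
  - destruct (fI alpha0); unfold I0r; lra.
Qed.

Lemma alpha_lt k : alpha k < alpha (k + 1).
Proof. rewrite alpha_succ. apply a_up, alpha_pos. Qed.

Lemma alpha_mono k l : (k < l)%Z -> alpha k < alpha l.
Proof.
  intro H. replace l with (k + Z.of_nat (S (Z.to_nat (l - k - 1))))%Z by lia.
  induction (Z.to_nat (l - k - 1)).
  - replace (k + Z.of_nat 1)%Z with (k + 1)%Z by lia. apply alpha_lt.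
  - replace (k + Z.of_nat (S (S n)))%Z with (k + Z.of_nat (S n) + 1)%Z by lia.
    pose proof (alpha_lt (k + Z.of_nat (S n))). lra.
Qed.

Lemma alpha_le k l : (k <= l)%Z -> alpha k <= alpha l.
Proof. intro H. destruct (Z.eq_dec k l). subst; lra. left; apply alpha_mono; lia. Qed.

Lemma alpha_A k : A (alpha k).
Proof. apply G_A. apply G_apow. auto. Qed.

Lemma alpha_low eps : 0 < eps -> exists k, alpha k < eps.
Proof.
  intro He. apply NNPP. intro Hn.
  assert (Hge : forall k, eps <= alpha k). { intro k. apply Rnot_lt_le. intro. apply Hn. exists k; auto. }
  set (E := fun x => exists n : nat, x = - alpha (- Z.of_nat n)).
  destruct (completeness E) as [m [Hub Hlub]].
  { exists (- eps). intros x [n ->]. specialize (Hge (- Z.of_nat n)%Z). lra. }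
  { exists (- alpha (- Z.of_nat 0)). exists 0%nat. auto. }
  assert (HL : forall n, - m <= alpha (- Z.of_nat n)). { intro n. assert (E (- alpha (- Z.of_nat n))) by (exists n; auto). apply Hub in H. lra. }
  assert (Hm1 : m <= - eps). { apply Hlub. intros x [n ->]. specialize (Hge (- Z.of_nat n)%Z). lra. }
  assert (Hm2 : - m <= alpha0) by apply (HL 0%nat).
  assert (Hup := a_up (- m) ltac:(lra)).
  destruct Ga as [_ [Gm _]].
  assert (Hm3 : m <= - a (- m)).
  { apply Hlub. intros x [n ->].
    replace (- Z.of_nat n)%Z with (- Z.of_nat (S n) + 1)%Z by lia. rewrite alpha_succ.
    assert (a (- m) <= a (alpha (- Z.of_nat (S n)))) by (apply mono_le; auto). lra. }
  lra.
Qed.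

Lemma alpha_high eps : 0 < eps -> exists k, r - eps < alpha k.
Proof.
  intro He. apply NNPP. intro Hn.
  assert (Hge : forall k, alpha k <= r - eps). { intro k. apply Rnot_lt_le. intro. apply Hn. exists k; auto. }
  set (E := fun x => exists n : nat, x = alpha (Z.of_nat n)).
  destruct (completeness E) as [m [Hub Hlub]].
  { exists (r - eps). intros x [n ->]. auto. }
  { exists (alpha (Z.of_nat 0)). exists 0%nat. auto. }
  assert (HL : forall n, alpha (Z.of_nat n) <= m). { intro n. apply Hub. exists n; auto. }
  assert (Hm1 : m <= r - eps). { apply Hlub. intros x [n ->]. auto. }
  assert (Hm2 : alpha0 <= m) by apply (HL 0%nat).
  pose proof (G_basic _ Gai) as [g0 [gr gI]].
  destruct Gai as [_ [Gm _]].
  assert (aim : 0 < ai m < r). { destruct (gI m). unfold I0r; lra. split; auto. rewrite <- g0. apply Gm. lra. }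
  assert (Hup := a_up (ai m) aim). rewrite aai in Hup.
  assert (Hm3 : m <= ai m).
  { apply Hlub. intros x [n ->]. rewrite alpha_pred.
    apply mono_le; auto. replace (Z.of_nat n + 1)%Z with (Z.of_nat (S n)) by lia. auto. }
  lra.
Qed.


Lemma apow_mono k s t : s < t -> apow a ai k s < apow a ai k t.
Proof. destruct (G_apow k) as [_ [H _]]. auto. Qed.

Lemma apow_inj k s t : apow a ai k s = apow a ai k t -> s = t.
Proof.
  intro E. destruct (Rtotal_order s t) as [h|[h|h]]; auto; apply (apow_mono k) in h; lra.
Qed.

Lemma conjZ_blocked k f u v : blocked f u v -> blocked (conjZ k f) (apow a ai k u) (apow a ai k v).
Proof.
  intros Hb t Ht. unfold conjZ. rewrite Hb. apply apow_cancel.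
  intros [h1 h2]. apply Ht. split.
  - rewrite <- (apow_cancel k t). apply apow_mono; auto.
  - rewrite <- (apow_cancel k t). apply apow_mono; auto.
Qed.

Lemma conjZ_commute k f g : commute f g -> commute (conjZ k f) (conjZ k g).
Proof. intros H t. unfold conjZ. rewrite !apow_cancel'. rewrite H. auto. Qed.

Lemma conjZ_conjZ j k f t : conjZ j (conjZ k f) t = conjZ (j + k) f t.
Proof. unfold conjZ. rewrite <- apow_add. rewrite <- apow_add. f_equal. f_equal. f_equal. lia. Qed.

Lemma conjZ_back k f t : conjZ (- k) (conjZ k f) t = f t.
Proof. rewrite conjZ_conjZ. replace (- k + k)%Z with 0%Z by lia. reflexivity. Qed.

Lemma conjset_conjZ f g : conjset a f g <-> exists k, forall t, g t = conjZ k f t.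
Proof.
  split.
  - intros [n [H|H]].
    + exists (Z.of_nat n). intro t. unfold conjZ.
      rewrite <- (apow_cancel (Z.of_nat n) t) at 1. rewrite apow_nat, H, <- apow_nat. auto.
    + exists (- Z.of_nat n)%Z. intro t. unfold conjZ. rewrite Z.opp_involutive.
      rewrite apow_nat, <- H, <- apow_nat, apow_cancel'. auto.
  - intros [k Hk]. destruct (Z_cases k) as [[n ->]|[n ->]].
    + exists n. left. intro t. rewrite Hk. unfold conjZ. rewrite <- !apow_nat, apow_cancel'. auto.
    + exists (S n). right. intro t. rewrite Hk. unfold conjZ. rewrite Z.opp_involutive.
      rewrite <- !apow_nat, apow_cancel. auto.
Qed.

Lemma fix_end x y bk u v : (forall s t, s < t -> x s < x t) -> (forall s t, s < t -> y s < y t) ->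
  (forall t, y (x t) = t /\ x (y t) = t) -> commute x bk -> blocked bk u v ->
  (forall t, u < t < v -> bk t <> t) -> u < v -> x u = u.
Proof.
  intros Hx Hy Hxy Hc Hb Hne Huv.
  assert (Cy : commute y bk).
  { intro t. rewrite <- (proj1 (Hxy (bk (y t)))). rewrite Hc. rewrite (proj2 (Hxy t)). auto. }
  assert (Inv : forall z, commute z bk -> (forall s t, x s = x t -> s = t) \/ True -> 
     (forall s t, z s = z t -> s = t) -> forall t, u < t < v -> u < z t < v).
  { intros z Cz _ Iz t Ht. apply NNPP. intro Hn. apply (Hne t Ht). apply Iz. rewrite Cz. apply Hb; auto. }
  assert (Ix : forall s t, x s = x t -> s = t). { intros s t E. rewrite <- (proj1 (Hxy s)), E. apply Hxy. }
  assert (Iy : forall s t, y s = y t -> s = t). { intros s t E. rewrite <- (proj2 (Hxy s)), E. apply Hxy. }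
  assert (Key : forall f g, (forall s t, s < t -> f s < f t) -> (forall t, f (g t) = t) ->
     (forall t, u < t < v -> u < g t < v) -> ~ u < f u).
  { intros f g Hf Hfg Hg H. set (s := (u + Rmin (f u) v) / 2).
    assert (HH : u < Rmin (f u) v) by (apply Rmin_glb_lt; lra).
    pose proof (Rmin_l (f u) v). pose proof (Rmin_r (f u) v).
    assert (Hs : u < s < v) by (unfold s; lra).
    assert (s < f u) by (unfold s; lra).
    destruct (Hg s Hs) as [Hg1 Hg2]. assert (Hlt : f u < f (g s)) by (apply Hf; lra). rewrite Hfg in Hlt. lra. }
  destruct (Rtotal_order (x u) u) as [h|[h|h]]; auto.
  - exfalso. assert (u < y u). { apply (mono_rev x); auto. rewrite (proj2 (Hxy u)). auto. }
    refine (Key y x Hy (fun t => proj1 (Hxy t)) _ H).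
    intros t Ht. apply (Inv x Hc); auto.
  - exfalso. refine (Key x y Hx (fun t => proj2 (Hxy t)) _ h).
    intros t Ht. apply (Inv y Cy); auto.
Qed.


Lemma transport d k y : gen (fun z => z = d) y -> gen (conjset a d) (conjZ k y).
Proof.
  intro H. induction H as [|g Hg|g h Hg IHg Hh IHh|g h Hg IHg Hinv|g h Hg IHg Hext].
  - apply gen_ext with (g := fun t => t). apply gen_id. intro t. unfold conjZ. apply apow_cancel.
  - subst. apply gen_base. apply conjset_conjZ. exists k. auto.
  - apply gen_ext with (g := fun t => conjZ k h (conjZ k g t)). apply gen_mul; auto.
    intro t. unfold conjZ. rewrite apow_cancel'. auto.
  - apply gen_inv with (g := conjZ k g); auto. intro t. unfold conjZ. rewrite !apow_cancel'.
    rewrite (proj1 (Hinv _)), (proj2 (Hinv _)). rewrite !apow_cancel. auto.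
  - apply gen_ext with (g := conjZ k g); auto. intro t. unfold conjZ. rewrite Hext. auto.
Qed.

Lemma alpha_conj k j : apow a ai k (alpha j) = alpha (k + j).
Proof. unfold alpha. rewrite apow_add. auto. Qed.

Lemma a_alpha0 : a alpha0 = alpha 1.
Proof. reflexivity. Qed.

Lemma bk_blocked b k : blocked b alpha0 (a alpha0) -> blocked (conjZ k b) (alpha k) (alpha (k + 1)).
Proof.
  intro Hb. rewrite a_alpha0 in Hb. apply (conjZ_blocked k) in Hb.
  rewrite !alpha_conj in Hb. replace (k + 0)%Z with k in Hb by lia. auto.
Qed.

Lemma back_dir b d x : G b -> G d -> blocked b alpha0 (a alpha0) -> blocked d alpha0 (a alpha0) ->
  commute d b -> gen (conjset a d) x -> G x /\ forall k, commute x (conjZ k b).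
Proof.
  intros Gb Gd Bb Bd Cdb H.
  induction H as [|g Hg|g h Hg IHg Hh IHh|g h Hg IHg Hinv|g h Hg IHg Hext].
  - split. apply G_id. intros k t. auto.
  - apply conjset_conjZ in Hg as [j Hj]. split.
    + apply G_ext with (f := conjZ j d); auto. apply G_conjZ; auto.
    + intro k. intro t. rewrite !Hj.
      destruct (Z.lt_total j k) as [hjk|[hjk|hjk]].
      * pose proof (alpha_le (j + 1) k ltac:(lia)).
        apply (blocked_commute (conjZ j d) (conjZ k b) (alpha j) (alpha (j+1)) (alpha k) (alpha (k+1))).
        apply (G_conjZ j d Gd). apply (G_conjZ k b Gb). apply bk_blocked; auto. apply bk_blocked; auto.
        apply alpha_lt. apply alpha_lt. auto.
      * subst. apply conjZ_commute. auto.
      * pose proof (alpha_le (k + 1) j ltac:(lia)). symmetry.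
        apply (blocked_commute (conjZ k b) (conjZ j d) (alpha k) (alpha (k+1)) (alpha j) (alpha (j+1))).
        apply (G_conjZ k b Gb). apply (G_conjZ j d Gd). apply bk_blocked; auto. apply bk_blocked; auto.
        apply alpha_lt. apply alpha_lt. auto.
  - destruct IHg as [G1 C1], IHh as [G2 C2]. split. apply G_comp; auto.
    intros k t. rewrite C1, C2. auto.
  - destruct IHg as [G1 C1]. destruct (G_inv g G1) as [g' [G' E']]. split.
    + apply G_ext with (f := g'); auto. intro t.
      rewrite <- (proj2 (Hinv t)) at 2. rewrite (proj1 (E' (h t))). auto.
    + intros k t. rewrite <- (proj2 (Hinv t)) at 1. rewrite <- C1. apply Hinv.
  - destruct IHg as [G1 C1]. split. apply G_ext with (f := g); auto.
    intros k t. rewrite !Hext. apply C1.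
Qed.


Lemma bk_ne b k t : (forall t, alpha0 < t < a alpha0 -> b t <> t) ->
  alpha k < t < alpha (k + 1) -> conjZ k b t <> t.
Proof.
  intros Hb Ht E. unfold conjZ in E.
  assert (Hs : alpha0 < apow a ai (- k) t < a alpha0).
  { rewrite a_alpha0. replace alpha0 with (apow a ai (- k) (alpha k)) by (rewrite alpha_conj; replace (- k + k)%Z with 0%Z by lia; reflexivity).
    replace (alpha 1) with (apow a ai (- k) (alpha (k + 1))) by (rewrite alpha_conj; replace (- k + (k + 1))%Z with 1%Z by lia; reflexivity).
    split; apply apow_mono; lra. }
  apply (Hb _ Hs). apply (apow_inj k). rewrite E. rewrite apow_cancel. auto.
Qed.

Lemma fwd_dir b d x : G b -> blocked b alpha0 (a alpha0) -> (forall t, alpha0 < t < a alpha0 -> b t <> t) ->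
  (forall x, (inF r Lam A x /\ (forall t, supp r x t -> alpha0 < t < a alpha0) /\ commute x b)
             <-> gen (fun y => y = d) x) ->
  G x -> (forall k, commute x (conjZ k b)) -> gen (conjset a d) x.
Proof.
  intros Gb Bb Nb Hd Gx Cx.
  destruct (G_inv x Gx) as [y [Gy Exy]].
  assert (Fix : forall k, x (alpha k) = alpha k).
  { intro k. apply (fix_end x y (conjZ k b) (alpha k) (alpha (k + 1))); auto.
    apply Gx. apply Gy. apply bk_blocked; auto. intros t Ht. apply bk_ne; auto. apply alpha_lt. }
  pose proof Gx as [X1 [X2 [X3 [L [HL XG]]]]].
  set (xk := fun k => restr (alpha k) (alpha (k + 1)) x).
  assert (xkgen : forall k, gen (conjset a d) (xk k)).
  { intro k.
    assert (Gxk : G (xk k)).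
    { apply G_restr; auto. pose proof (alpha_pos k). pose proof (alpha_lt k). lra.
      left; apply alpha_pos. apply alpha_A. apply alpha_A. }
    assert (Bxk : blocked (xk k) (alpha k) (alpha (k + 1))) by (intros t Ht; apply restr_out; auto).
    assert (Cxk : commute (xk k) (conjZ k b)).
    { intro t. pose proof (bk_blocked b k Bb) as Bk.
      destruct (classic (alpha k < t < alpha (k + 1))) as [Ht|Ht].
      - assert (Hbt := blocked_inv (conjZ k b) _ _ t ltac:(apply (G_conjZ k b Gb)) Bk (alpha_lt k) Ht).
        unfold xk. rewrite !restr_in by (auto; lra). apply Cx.
      - rewrite (Bk t Ht). unfold xk. rewrite restr_out by auto. rewrite (Bk t Ht). auto. }
    set (yk := conjZ (- k) (xk k)).
    assert (Gyk : gen (fun z => z = d) yk).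
    { apply Hd. split; [|split].
      - apply G_inF. apply G_conjZ; auto.
      - intros t [Ht Hne]. apply NNPP. intro Hn. apply Hne.
        pose proof (conjZ_blocked (- k) _ _ _ Bxk) as B.
        rewrite !alpha_conj in B. replace (- k + k)%Z with 0%Z in B by lia.
        replace (- k + (k + 1))%Z with 1%Z in B by lia. apply B. auto.
      - intro t. unfold yk.
        pose proof (conjZ_commute (- k) _ _ Cxk t) as C.
        rewrite !conjZ_back in C. exact C. }
    apply (transport d k) in Gyk. apply gen_ext with (g := conjZ k yk); auto.
    intro t. unfold yk. rewrite conjZ_conjZ. replace (k + - k)%Z with 0%Z by lia. reflexivity. }
  destruct (ex_right L 0 rpos) as [v0 [Hv0 Hq0]].
  destruct (XG 0 v0) as [l0 [c0 [_ [_ E0]]]]; try lra; auto.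
  destruct (alpha_low v0 ltac:(lra)) as [k0 Hk0].
  assert (Id0 : forall t, 0 <= t <= alpha k0 -> x t = t).
  { pose proof (alpha_pos (k0 - 1)). pose proof (alpha_pos k0).
    pose proof (alpha_lt (k0 - 1)). replace (k0 - 1 + 1)%Z with k0 in H1 by lia.
    assert (e1 := Fix (k0 - 1)%Z). assert (e2 := Fix k0).
    rewrite E0 in e1 by lra. rewrite E0 in e2 by lra.
    assert (l0 = 1). { apply (Rmult_eq_reg_r (alpha k0 - alpha (k0 - 1))). lra. lra. }
    subst. intros t Ht. rewrite E0 by lra. lra. }
  destruct (ex_left L) as [u0 [Hu0 Hqr]].
  destruct (XG u0 r) as [l1 [c1 [_ [_ E1]]]]; try lra; auto.
  destruct (alpha_high (r - u0) ltac:(lra)) as [K HK].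
  set (K' := Z.max K k0).
  assert (HK' : u0 < alpha K') by (pose proof (alpha_le K K' ltac:(lia)); lra).
  assert (Idr : forall t, alpha K' <= t < r -> x t = t).
  { pose proof (alpha_pos K'). pose proof (alpha_pos (K' + 1)).
    pose proof (alpha_lt K').
    assert (e1 := Fix K'). assert (e2 := Fix (K' + 1)%Z).
    rewrite E1 in e1 by lra. rewrite E1 in e2 by lra.
    assert (l1 = 1). { apply (Rmult_eq_reg_r (alpha (K' + 1) - alpha K')). lra. lra. }
    subst. intros t Ht. rewrite E1 by lra. lra. }
  set (P := fix P (j : nat) : R -> R := match j with O => fun t => t | S j => fun t => xk (k0 + Z.of_nat j)%Z (P j t) end).
  assert (Pgen : forall j, gen (conjset a d) (P j)).
  { induction j. apply gen_id. simpl. apply gen_mul; auto. }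
  assert (Pval : forall j t, (alpha k0 < t < alpha (k0 + Z.of_nat j) -> P j t = x t) /\
                           (~ (alpha k0 < t < alpha (k0 + Z.of_nat j)) -> P j t = t)).
  { induction j; intro t.
    - split. replace (k0 + Z.of_nat 0)%Z with k0 by lia. lra. auto.
    - destruct (IHj t) as [I1 I2].
      set (u := alpha (k0 + Z.of_nat j)). set (w := alpha (k0 + Z.of_nat (S j))).
      assert (Ew : w = alpha (k0 + Z.of_nat j + 1)) by (unfold w; f_equal; lia).
      assert (Eu : u = alpha (k0 + Z.of_nat j)) by reflexivity.
      assert (Ew' : w = alpha (k0 + Z.of_nat (S j))) by reflexivity.
      assert (Huw : u < w) by (rewrite Ew; apply alpha_lt).
      assert (Hku : alpha k0 <= u) by (apply alpha_le; lia).
      assert (Fu : x u = u) by apply Fix.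
      assert (Fw : x w = w) by (rewrite Ew; apply Fix).
      assert (XK : forall s, xk (k0 + Z.of_nat j)%Z s = restr u w x s) by (intro; unfold xk; rewrite <- Ew; reflexivity).
      simpl P. rewrite XK. fold w.
      destruct (Rlt_dec (alpha k0) t); destruct (Rlt_dec t u); destruct (Req_dec t u).
      + lra.
      + rewrite I1 by lra.
        assert (Q1 : x (alpha k0) < x t) by (apply X2; auto). assert (Q2 : x t < x u) by (apply X2; auto).
        rewrite Fix in Q1. rewrite restr_out by lra. split; intro; lra.
      + subst t. rewrite I2 by lra. rewrite restr_out by lra. split; intro; auto.
      + rewrite I2 by lra. split; intro.
        * rewrite restr_in; auto. lra.
        * rewrite restr_out; auto. intro HH; apply H0; lra.
      + lra.
      + rewrite I2 by lra. rewrite restr_out by lra. split; intro; lra.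
      + rewrite I2 by lra. rewrite restr_out by lra. split; intro; lra.
      + rewrite I2 by lra. rewrite restr_out by lra. split; intro; lra. }
  set (m := Z.to_nat (K' - k0)).
  assert (Em : alpha (k0 + Z.of_nat m) = alpha K') by (unfold m; f_equal; lia).
  apply gen_ext with (g := P m); auto.
  intro t. destruct (Pval m t) as [I1 I2]. rewrite Em in I1, I2.
  destruct (classic (alpha k0 < t < alpha K')) as [Ht|Ht].
  - symmetry; auto.
  - rewrite I2 by auto. destruct (classic (I0r r t)) as [[Ht1 Ht2]|Ht'].
    + destruct (Rle_dec t (alpha k0)). apply Id0; lra. apply Idr. lra.
    + auto.
Qed.


Lemma main_iff b d : G b -> blocked b alpha0 (a alpha0) -> (forall t, alpha0 < t < a alpha0 -> b t <> t) ->
  (forall x, (inF r Lam A x /\ (forall t, supp r x t -> alpha0 < t < a alpha0) /\ commute x b)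
             <-> gen (fun y => y = d) x) ->
  forall x, (inF r Lam A x /\ (forall g, conjset a b g -> commute x g)) <-> gen (conjset a d) x.
Proof.
  intros Gb Bb Nb Hd.
  assert (Hd0 := proj2 (Hd d) (gen_base _ d eq_refl)). destruct Hd0 as [Fd [Sd Cdb]].
  assert (Gd := inF_G d Fd).
  assert (Bd : blocked d alpha0 (a alpha0)).
  { intros t Ht. destruct (classic (I0r r t)) as [It|It].
    - apply NNPP. intro Hn. apply Ht. apply Sd. split; auto.
    - apply Fd; auto. }
  intro x. split.
  - intros [Fx Cx]. apply (fwd_dir b d x); auto. apply inF_G; auto.
    intro k. apply Cx. apply conjset_conjZ. exists k; auto.
  - intro H. destruct (back_dir b d x Gb Gd Bb Bd Cdb H) as [Gx Cx]. split.
    + apply G_inF; auto.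
    + intros g Hg. apply conjset_conjZ in Hg as [k Hk]. intro t. rewrite !Hk. apply Cx.
Qed.

End PL.


Theorem lemma4p6 (r : R) (Lam A : R -> Prop) (a b d : R -> R) (alpha0 : R) :
  admissible r Lam A ->
  inFup r Lam A a ->
  (forall t, supp r a t <-> 0 < t < r) ->
  0 < alpha0 < r -> A alpha0 ->
  inFup r Lam A b ->
  (forall t, supp r b t <-> alpha0 < t < a alpha0) ->
  (* d generates the centralizer of b in F_{(alpha0, alpha1)}, alpha1 = (alpha0)a *)
  (forall x, (inF r Lam A x /\ (forall t, supp r x t -> alpha0 < t < a alpha0)
              /\ commute x b)
             <-> gen (fun y => y = d) x) ->
  forall x,
    (inF r Lam A x /\ (forall g, conjset a b g -> commute x g))
    <-> gen (conjset a d) x.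
Proof.
  intros [rpos [Lpos [L1 [Lmul [Linv [_ [A0 [Aadd [Aopp [Ar LA]]]]]]]]]] [Fa Ua] Sa Hal0 Aal0 [Fb Ub] Sb Hd.
  assert (Ga := inF_G r Lam A Lpos Aadd Aopp Ar LA a Fa).
  assert (Gb := inF_G r Lam A Lpos Aadd Aopp Ar LA b Fb).
  destruct (G_inv r Lam A rpos Lpos Linv Aadd Aopp LA a Ga) as [ai [Gai Eai]].
  assert (a_up : forall t, 0 < t < r -> t < a t).
  { intros t Ht. assert (t <= a t) by (apply Ua; unfold I0r; lra).
    assert (a t <> t) by (apply (proj2 (Sa t)) in Ht; apply Ht). lra. }
  apply (main_iff r Lam A rpos Lpos L1 Lmul Linv A0 Aadd Aopp Ar LA a ai
           (fun t => proj2 (Eai t)) (fun t => proj1 (Eai t)) Ga Gai alpha0 a_up Hal0 Aal0 b d Gb); auto.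
  - intros t Ht. destruct (classic (I0r r t)) as [It|It].
    + apply NNPP. intro Hn. apply Ht. apply Sb. split; auto.
    + apply Fb; auto.
  - intros t Ht. apply (proj2 (Sb t) Ht).
Qed.
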